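(* Let $q$ be a prime power, $n\le m$ and $r\le\min\{n,m\}$. Let $\mathcal M$ be a set of $r$-dimensional subspaces of $\mathbb F_q^m$ with minimum subspace distance $d_{S,M}$, and let $\mathcal N$ be a set of $r$-dimensional subspaces of $\mathbb F_q^n$ with minimum subspace distance $d_{S,N}$. Then there exists a constant-rank code $\mathcal C$, i.e. a set of $m\times n$ matrices over $\mathbb F_q$ all of rank exactly $r$, of cardinality $\min\{|\mathcal M|,|\mathcal N|\}$, such that the column space of every element of $\mathcal C$ lies in $\mathcal M$ and the row space of every element of $\mathcal C$ lies in $\mathcal N$, and whose minimum rank distance $d_R$ satisfies $$d_R\ge\tfrac12 d_{S,M}+\tfrac12 d_{S,N};$$ and if moreover $|\mathcal M|=|\mathcal N|$, then additionally $d_R\le \tfrac12\min\{d_{S,M},d_{S,N}\}+r$.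
   Context: For subspaces $U,V$ of $\mathbb F_q^N$, the subspace distance is $d_S(U,V)=\dim(U+V)-\dim(U\cap V)$; the minimum subspace distance of a set of subspaces is the minimum of $d_S$ over pairs of distinct elements. The rank distance of two matrices $\mathbf X,\mathbf Y$ is $\mathrm{rk}(\mathbf X-\mathbf Y)$, and the minimum rank distance of a set of matrices is its minimum over distinct pairs. The column space of an $m\times n$ matrix is a subspace of $\mathbb F_q^m$, its row space a subspace of $\mathbb F_q^n$. *)

(* Defs.v *)
From HB Require Import structures.
From mathcomp Require Import all_boot all_order all_algebra.
Set Implicit Arguments. Unset Strict Implicit. Unset Printing Implicit Defensive.
Import GRing.Theory.
Local Open Scope ring_scope.

(* Subspaces of F^k are represented in mxalgebra style by their canonical
   square generator matrix U : 'M[F]_k with <<U>>%MS = U (row space of U). *)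
Definition is_subspace (F : fieldType) (k : nat) (U : 'M[F]_k) : bool :=
  (<<U>>%MS == U).

Definition subspace_dist (F : fieldType) (k : nat) (U V : 'M[F]_k) : nat :=
  (\rank (U + V)%MS - \rank (U :&: V)%MS)%N.

Definition rank_dist (F : fieldType) (m n : nat) (X Y : 'M[F]_(m, n)) : nat :=
  \rank (X - Y).

Definition colspace (F : fieldType) (m n : nat) (X : 'M[F]_(m, n)) : 'M[F]_m :=
  <<X^T>>%MS.
Definition rowspace (F : fieldType) (m n : nat) (X : 'M[F]_(m, n)) : 'M[F]_n :=
  <<X>>%MS.

(* d is the minimum of dist over pairs of distinct elements of S
   (in particular S has at least two elements, so the minimum exists). *)
Definition is_min_dist (T : finType) (dist : T -> T -> nat) (S : {set T}) (d : nat) : Prop :=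
  (exists x y, [/\ x \in S, y \in S, x != y & dist x y = d]) /\
  (forall x y, x \in S -> y \in S -> x != y -> (d <= dist x y)%N).

(* Main.v *)
Require Import Defs.
From HB Require Import structures.
From mathcomp Require Import all_boot all_order all_algebra.
From mathcomp Require Import zify.
Set Implicit Arguments. Unset Strict Implicit. Unset Printing Implicit Defensive.
Import GRing.Theory.
Local Open Scope ring_scope.

Lemma key (F : fieldType) (m n : nat) (X Y : 'M[F]_(m, n)) :
  (\rank (X + Y)%MS + \rank (X^T + Y^T)%MS <= \rank (X - Y)%R + \rank X + \rank Y)%N.
Proof.
set Z := X - Y.
have h1 : (\rank (X + Y)%MS <= \rank (Z + Y)%MS)%N.
  apply: mxrankS; rewrite addsmx_sub; apply/andP; split.
    have -> : X = Z + Y by rewrite /Z subrK.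
    by apply: addmx_sub_adds; rewrite ?submx_refl.
  exact: addsmxSr.
have h2 := mxrank_sum_cap Z Y.
set P := kermx X.
have h3 : (\rank (P *m Y) <= \rank (Z :&: Y)%MS)%N.
  apply: mxrankS; rewrite sub_capmx submxMl andbT.
  have -> : P *m Y = - (P *m Z) by rewrite /Z mulmxBr mulmx_ker sub0r opprK.
  by rewrite eqmx_opp submxMl.
have h4 := mxrank_mul_ker P Y.
have h5 : (\rank (P :&: kermx Y)%MS <= \rank (kermx (row_mx X Y)))%N.
  apply: mxrankS; apply/sub_kermxP.
  rewrite mul_mx_row.
  have -> : (P :&: kermx Y)%MS *m X = 0 by apply/sub_kermxP; exact: capmxSl.
  have -> : (P :&: kermx Y)%MS *m Y = 0 by apply/sub_kermxP; exact: capmxSr.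
  by rewrite row_mx0.
rewrite !mxrank_ker in h4 h5.
have h6 : \rank (row_mx X Y) = \rank (X^T + Y^T)%MS.
  by rewrite -mxrank_tr tr_row_mx addsmxE.
have h7 := rank_leq_row (row_mx X Y).
have h8 := rank_leq_row X.
rewrite -h6. lia.
Qed.

Lemma dist_eq (F : fieldType) k (U V : 'M[F]_k) p q (A : 'M[F]_(p,k)) (B : 'M[F]_(q,k)) :
  (A :=: U)%MS -> (B :=: V)%MS ->
  subspace_dist U V = (2 * \rank (A + B)%MS - \rank A - \rank B)%N.
Proof.
move=> hA hB; rewrite /subspace_dist.
have h := mxrank_sum_cap U V.
have e1 : \rank (U + V)%MS = \rank (A + B)%MS by rewrite (adds_eqmx hA hB).
have e2 : \rank U = \rank A by rewrite hA.
have e3 : \rank V = \rank B by rewrite hB.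
lia.
Qed.

Lemma pair_bounds (F : fieldType) (m n r : nat) (X Y : 'M[F]_(m, n)) :
  \rank X = r -> \rank Y = r ->
  let dc := subspace_dist (colspace X) (colspace Y) in
  let dr := subspace_dist (rowspace X) (rowspace Y) in
  [/\ (dc + dr <= 2 * rank_dist X Y)%N,
      (2 * rank_dist X Y <= dc + 2 * r)%N &
      (2 * rank_dist X Y <= dr + 2 * r)%N].
Proof.
move=> hX hY dc dr.
have ec : dc = (2 * \rank (X^T + Y^T)%MS - \rank X^T - \rank Y^T)%N.
  by apply: dist_eq; apply: eqmx_sym; apply: genmxE.
have er : dr = (2 * \rank (X + Y)%MS - \rank X - \rank Y)%N.
  by apply: dist_eq; apply: eqmx_sym; apply: genmxE.
rewrite !mxrank_tr in ec.
have hk := key X Y.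
have u1 : (rank_dist X Y <= \rank (X^T + Y^T)%MS)%N.
  rewrite /rank_dist -mxrank_tr linearB /=.
  apply: mxrankS; apply: addmx_sub_adds; first exact: submx_refl.
  by rewrite eqmx_opp submx_refl.
have u2 : (rank_dist X Y <= \rank (X + Y)%MS)%N.
  rewrite /rank_dist.
  apply: mxrankS; apply: addmx_sub_adds; first exact: submx_refl.
  by rewrite eqmx_opp submx_refl.
rewrite /rank_dist in u1 u2 *.
have l1 : (\rank X <= \rank (X + Y)%MS)%N by apply: mxrankS; apply: addsmxSl.
have l2 : (\rank X^T <= \rank (X^T + Y^T)%MS)%N by apply: mxrankS; apply: addsmxSl.
rewrite mxrank_tr in l2.
split; lia.
Qed.

Definition mkA (F : fieldType) (r k : nat) (U : 'M[F]_k) : 'M[F]_(r, k) :=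
  pid_mx r *m row_ebase U.

Lemma mkA_props (F : fieldType) (r k : nat) (U : 'M[F]_k) :
  \rank U = r -> (mkA r U :=: U)%MS /\ \rank (mkA r U) = r.
Proof.
move=> hr; subst r; split; first exact: eq_row_base.
exact/eqP/row_base_free.
Qed.

Definition mk (F : fieldType) (r m n : nat) (U : 'M[F]_m) (V : 'M[F]_n) : 'M[F]_(m, n) :=
  (mkA r U)^T *m mkA r V.

Lemma mk_props (F : fieldType) (r m n : nat) (U : 'M[F]_m) (V : 'M[F]_n) :
  is_subspace U -> is_subspace V -> \rank U = r -> \rank V = r ->
  [/\ colspace (mk r U V) = U, rowspace (mk r U V) = V & \rank (mk r U V) = r].
Proof.
move=> sU sV rU rV.
have [eA rA] := mkA_props rU.
have [eB rB] := mkA_props rV.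
have fA : row_full (mkA r U)^T by rewrite /row_full mxrank_tr rA.
have fB : row_full (mkA r V)^T by rewrite /row_full mxrank_tr rB.
have e1 : (mk r U V :=: V)%MS.
  rewrite /mk; apply: eqmx_trans eB; exact: eqmxMfull.
have e2 : ((mk r U V)^T :=: U)%MS.
  rewrite /mk trmx_mul trmxK; apply: eqmx_trans eA; exact: eqmxMfull.
split.
- by rewrite /colspace (eq_genmx e2); apply/eqP.
- by rewrite /rowspace (eq_genmx e1); apply/eqP.
- by rewrite e1.
Qed.

Theorem proposition2 (F : finFieldType) (m n r : nat)
  (Hnm : (n <= m)%N) (Hr : (r <= minn n m)%N)
  (M : {set 'M[F]_m}) (N : {set 'M[F]_n}) (dSM dSN : nat)
  (HMsub : forall U, U \in M -> is_subspace U /\ \rank U = r)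
  (HNsub : forall V, V \in N -> is_subspace V /\ \rank V = r)
  (HdM : is_min_dist (@subspace_dist F m) M dSM)
  (HdN : is_min_dist (@subspace_dist F n) N dSN) :
  exists (C : {set 'M[F]_(m, n)}) (dR : nat),
    #|C| = minn #|M| #|N| /\
    (forall X, X \in C -> \rank X = r) /\
    (forall X, X \in C -> colspace X \in M) /\
    (forall X, X \in C -> rowspace X \in N) /\
    is_min_dist (@rank_dist F m n) C dR /\
    (dSM + dSN <= 2 * dR)%N /\
    (#|M| = #|N| -> (2 * dR <= minn dSM dSN + 2 * r)%N).
Proof.
set k := minn #|M| #|N|.
set eM := enum M; set eN := enum N.
have szM : size eM = #|M| by rewrite -cardE.
have szN : size eN = #|N| by rewrite -cardE.
have ltM (i : 'I_k) : (i < size eM)%N by rewrite szM; apply: leq_trans (ltn_ord i) (geq_minl _ _).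
have ltN (i : 'I_k) : (i < size eN)%N by rewrite szN; apply: leq_trans (ltn_ord i) (geq_minr _ _).
have inM (i : 'I_k) : nth 0 eM i \in M by rewrite -mem_enum mem_nth.
have inN (i : 'I_k) : nth 0 eN i \in N by rewrite -mem_enum mem_nth.
pose f (i : 'I_k) : 'M[F]_(m, n) := mk r (nth 0 eM i) (nth 0 eN i).
have fP (i : 'I_k) : [/\ colspace (f i) = nth 0 eM i, rowspace (f i) = nth 0 eN i
                        & \rank (f i) = r].
  have [s1 r1] := HMsub _ (inM i); have [s2 r2] := HNsub _ (inN i).
  exact: mk_props.
have nthM (i j : 'I_k) : (nth 0 eM i == nth 0 eM j) = (i == j).
  by rewrite nth_uniq ?enum_uniq.
have nthN (i j : 'I_k) : (nth 0 eN i == nth 0 eN j) = (i == j).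
  by rewrite nth_uniq ?enum_uniq.
have finj : injective f.
  move=> i j eij; apply/eqP; rewrite -nthM.
  by have [<- _ _] := fP i; rewrite eij; have [-> _ _] := fP j.
set C := [set f i | i in 'I_k].
have cardC : #|C| = k by rewrite card_imset // card_ord.
have Cf X : X \in C -> exists i, X = f i by case/imsetP=> i _ ->; exists i.
have pairP (X Y : 'M[F]_(m, n)) : X \in C -> Y \in C -> X != Y ->
  [/\ (dSM + dSN <= 2 * rank_dist X Y)%N,
      (rank_dist X Y <= rank_dist X Y)%N & True].
  move=> /Cf[i ->] /Cf[j ->] nij.
  have nij' : i != j by apply: contraNneq nij => ->.
  have [c1 w1 r1] := fP i; have [c2 w2 r2] := fP j.
  have [b1 _ _] := pair_bounds r1 r2.
  have d1 := HdM.2 _ _ (inM i) (inM j) ltac:(by rewrite nthM).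
  have d2 := HdN.2 _ _ (inN i) (inN j) ltac:(by rewrite nthN).
  rewrite -c1 -c2 in d1; rewrite -w1 -w2 in d2.
  split => //; lia.
have k2 : (1 < k)%N.
  have [[x [y [xM yM nxy _]]] _] := HdM.
  have [[x' [y' [xN yN nxy' _]]] _] := HdN.
  have c1 : (1 < #|M|)%N.
    have := subset_leq_card (A := [set x; y]) (B := M).
    rewrite cards2 nxy; apply; apply/subsetP => z; rewrite !inE.
    by case/orP => /eqP ->.
  have c2 : (1 < #|N|)%N.
    have := subset_leq_card (A := [set x'; y']) (B := N).
    rewrite cards2 nxy'; apply; apply/subsetP => z; rewrite !inE.
    by case/orP => /eqP ->.
  by rewrite /k leq_min c1 c2.
pose P (d : nat) := [exists X in C, exists Y in C, (X != Y) && (rank_dist X Y == d)].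
have exP : exists d, P d.
  pose i0 : 'I_k := Ordinal (ltnW k2). pose i1 : 'I_k := Ordinal k2.
  exists (rank_dist (f i0) (f i1)).
  apply/existsP; exists (f i0); rewrite imset_f //=.
  apply/existsP; exists (f i1); rewrite imset_f //= eqxx andbT.
  by rewrite (inj_eq finj).
case: (ex_minnP exP) => dR HP Hmin.
have Pxy (X Y : 'M[F]_(m, n)) : X \in C -> Y \in C -> X != Y -> P (rank_dist X Y).
  move=> hX hY nXY; apply/existsP; exists X; rewrite hX /=.
  by apply/existsP; exists Y; rewrite hY /= nXY eqxx.
exists C, dR.
have [x [y [xC yC nxy dxy]]] : exists x y, [/\ x \in C, y \in C, x != y & rank_dist x y = dR].
  case/existsP: HP => x /andP[xC /existsP[y /and3P[yC nxy /eqP d]]].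
  by exists x, y.
split; first exact: cardC.
split; first by move=> X /Cf[i ->]; have [_ _ ->] := fP i.
split; first by move=> X /Cf[i ->]; have [-> _ _] := fP i.
split; first by move=> X /Cf[i ->]; have [_ -> _] := fP i.
split.
  split; first by exists x, y.
  by move=> X Y hX hY nXY; apply: Hmin; apply: Pxy.
split.
  by have [h _ _] := pairP x y xC yC nxy; rewrite -dxy.
move=> eMN.
have kM : k = #|M| by rewrite /k eMN minnn.
have kN : k = #|N| by rewrite /k -eMN minnn.
have upM : (2 * dR <= dSM + 2 * r)%N.
  have [[U1 [U2 [U1M U2M nU dU]]] _] := HdM.
  have i1lt : (index U1 eM < k)%N by rewrite kM -szM index_mem mem_enum.
  have i2lt : (index U2 eM < k)%N by rewrite kM -szM index_mem mem_enum.
  pose i1 : 'I_k := Ordinal i1lt. pose i2 : 'I_k := Ordinal i2lt.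
  have [c1 _ r1] := fP i1; have [c2 _ r2] := fP i2.
  rewrite /= nth_index ?mem_enum // in c1.
  rewrite /= nth_index ?mem_enum // in c2.
  have [_ b _] := pair_bounds r1 r2.
  rewrite c1 c2 dU in b.
  have nf : f i1 != f i2 by apply: contraNneq nU => e; rewrite -c1 -c2 e.
  have := Hmin _ (Pxy _ _ (imset_f _ _) (imset_f _ _) nf).
  move=> h; have {}h := h isT isT; lia.
have upN : (2 * dR <= dSN + 2 * r)%N.
  have [[W1 [W2 [W1M W2M nU dU]]] _] := HdN.
  have i1lt : (index W1 eN < k)%N by rewrite kN -szN index_mem mem_enum.
  have i2lt : (index W2 eN < k)%N by rewrite kN -szN index_mem mem_enum.
  pose i1 : 'I_k := Ordinal i1lt. pose i2 : 'I_k := Ordinal i2lt.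
  have [_ c1 r1] := fP i1; have [_ c2 r2] := fP i2.
  rewrite /= nth_index ?mem_enum // in c1.
  rewrite /= nth_index ?mem_enum // in c2.
  have [_ _ b] := pair_bounds r1 r2.
  rewrite c1 c2 dU in b.
  have nf : f i1 != f i2 by apply: contraNneq nU => e; rewrite -c1 -c2 e.
  have := Hmin _ (Pxy _ _ (imset_f _ _) (imset_f _ _) nf).
  move=> h; have {}h := h isT isT; lia.
lia.
Qed.
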